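(* Let $n\ge1$, $K=\mathbb{R}^n_+$, and $\bar x\in K\cap\mathbb{Z}^n\setminus\{0\}$. Then $$Q(\bar x)=\Big\{x\in\mathbb{R}^n:\ x_i\ge0\ (i=1,\dots,n),\ \ \sum_{i=1}^k d^k_i x_i\ge\sum_{i=1}^k d^k_i\bar x_i\ (k=1,\dots,n)\Big\}.$$
   Context: Lexicographic order: for $x,y\in\mathbb{R}^n$, $x\prec y$ iff $x\ne y$ and $x_i<y_i$ for the smallest index $i$ with $x_i\ne y_i$; $\succeq$ has the obvious meaning. $Q(\bar x):=\operatorname{conv}\{x\in K\cap\mathbb{Z}^n: x\succeq\bar x\}$. For $k\in\{1,\dots,n\}$ and $i\in\{1,\dots,k\}$: $d^k_k=1$; $d^k_{k-1}=\bar x_k$ (if $k\ge2$); and $d^k_i=\bar x_k\prod_{j=i+1}^{k-1}(\bar x_j+1)$ for $i\le k-2$. The inequality $\sum_{i=1}^k d^k_i x_i\ge\sum_{i=1}^k d^k_i\bar x_i$ is called the $k$-th lex-cut associated with $\bar x$. *)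

(* Defs.v *)
From HB Require Import structures.
From mathcomp Require Import all_boot all_order all_algebra.
From mathcomp Require Import reals.
Set Implicit Arguments. Unset Strict Implicit. Unset Printing Implicit Defensive.
Import Order.TTheory GRing.Theory Num.Theory.
Local Open Scope ring_scope.

(* Points of R^n are functions 'I_n -> R; coordinate i (0-based) is the
   paper's coordinate i+1. *)

Definition conv_hull (R : realType) (n : nat) (S : ('I_n -> R) -> Prop)
  (x : 'I_n -> R) : Prop :=
  exists (m : nat) (lam : 'I_m -> R) (p : 'I_m -> 'I_n -> R),
    (forall t, 0 <= lam t) /\ \sum_(t < m) lam t = 1 /\
    (forall t, S (p t)) /\ (forall i, x i = \sum_(t < m) lam t * p t i).

Definition lex_lt (R : realType) (n : nat) (x y : 'I_n -> R) : Prop :=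
  exists i : 'I_n, (forall j : 'I_n, (j < i)%N -> x j = y j) /\ x i < y i.

Definition lex_ge (R : realType) (n : nat) (x y : 'I_n -> R) : Prop :=
  x = y \/ lex_lt y x.

Definition nonneg_int_pt (R : realType) (n : nat) (x : 'I_n -> R) : Prop :=
  forall i, 0 <= x i /\ x i \is a Num.int.

Definition Qset (R : realType) (n : nat) (xbar : 'I_n -> R) : ('I_n -> R) -> Prop :=
  conv_hull (fun x => nonneg_int_pt x /\ lex_ge x xbar).

(* Lex-cut coefficients, 0-based: lexd xbar k i is the paper's d^{k+1}_{i+1}
   (only used for i <= k):
     d^k_k = 1, d^k_{k-1} = xbar_k,
     d^k_i = xbar_k * prod_{j=i+1}^{k-1} (xbar_j + 1) for i <= k-2. *)
Definition lexd (R : realType) (n : nat) (xbar : 'I_n -> R) (k i : 'I_n) : R :=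
  if (i == k :> nat) then 1
  else if (i.+1 == k :> nat) then xbar k
  else xbar k * \prod_(j < n | (i < j)%N && (j < k)%N) (xbar j + 1).

Definition lex_cut (R : realType) (n : nat) (xbar : 'I_n -> R) (k : 'I_n)
  (x : 'I_n -> R) : Prop :=
  \sum_(i < n | (i <= k)%N) lexd xbar k i * x i
    >= \sum_(i < n | (i <= k)%N) lexd xbar k i * xbar i.

(* Main.v *)
Require Import Defs.
From HB Require Import structures.
From mathcomp Require Import all_boot all_order all_algebra.
From mathcomp Require Import reals ring lra zify.
Import Order.TTheory GRing.Theory Num.Theory.
Local Open Scope ring_scope.
Set Implicit Arguments. Unset Strict Implicit. Unset Printing Implicit Defensive.

Section Conv.
Variables (R : realType) (n : nat).
Implicit Types (S : ('I_n -> R) -> Prop).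

Lemma conv_pt S (y : 'I_n -> R) : S y -> conv_hull S y.
Proof.
move=> Sy; exists 1%N, (fun _ => 1), (fun _ => y); split=> //.
split; first by rewrite big_ord1.
split=> // i; by rewrite big_ord1 mul1r.
Qed.

Lemma conv_mono S S' y : (forall z, S z -> S' z) -> conv_hull S y -> conv_hull S' y.
Proof.
move=> SS [m [lam [p [H1 [H2 [H3 H4]]]]]].
by exists m, lam, p; split=> //; split=> //; split=> // t; apply: SS.
Qed.

Lemma conv_comb S (a b x : 'I_n -> R) (th : R) :
  0 <= th <= 1 -> conv_hull S a -> conv_hull S b ->
  (forall i, x i = th * a i + (1 - th) * b i) -> conv_hull S x.
Proof.
move=> /andP[th0 th1] [m1 [l1 [p1 [A1 [A2 [A3 A4]]]]]]
  [m2 [l2 [p2 [B1 [B2 [B3 B4]]]]]] Hx.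
exists (m1 + m2)%N,
  (fun t => match split t with inl t1 => th * l1 t1 | inr t2 => (1 - th) * l2 t2 end),
  (fun t => match split t with inl t1 => p1 t1 | inr t2 => p2 t2 end).
split.
  move=> t; case: (split t) => [t1|t2]; apply: mulr_ge0 => //; by rewrite subr_ge0.
split.
  rewrite big_split_ord /=.
  under eq_bigr => t _ do rewrite (unsplitK (inl _ t)).
  under [X in _ + X = _]eq_bigr => t _ do rewrite (unsplitK (inr _ t)).
  by rewrite -!mulr_sumr A2 B2 !mulr1 addrCA subrr addr0.
split.
  by move=> t; case: (split t).
move=> i; rewrite Hx big_split_ord /=.
under eq_bigr => t _ do rewrite (unsplitK (inl _ t)).
under [X in _ = _ + X]eq_bigr => t _ do rewrite (unsplitK (inr _ t)).
rewrite A4 B4 !mulr_sumr; congr (_ + _); apply: eq_bigr => t _; by rewrite mulrA.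
Qed.

End Conv.

Section Round.
Variables (R : realType) (n : nat).
Implicit Types (S P : ('I_n -> R) -> Prop).

Definition upd (y : 'I_n -> R) (q : 'I_n) (v : R) : 'I_n -> R :=
  fun i => if i == q then v else y i.

Lemma round S P :
  (forall y, P y -> (forall i, y i \is a Num.int) -> S y) ->
  (forall y q, P y -> y q \isn't a Num.int ->
     P (upd y q (Num.floor (y q))%:~R) /\ P (upd y q (Num.floor (y q) + 1)%:~R)) ->
  forall y, P y -> conv_hull S y.
Proof.
move=> HS HP.
suff: forall q, (q <= n)%N -> forall y, P y ->
   (forall i : 'I_n, (q <= i)%N -> y i \is a Num.int) -> conv_hull S y.
  by move=> H y Py; apply: (H n) => // i; rewrite leqNgt ltn_ord.
elim=> [_ y Py Hy|q IH Hq y Py Hy].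
  by apply: conv_pt; apply: HS => // i; apply: Hy.
have qn : (q < n)%N by [].
set oq := Ordinal qn.
have [yint|ynint] := boolP (y oq \is a Num.int).
  apply: IH => //; first exact: ltnW.
  move=> i; rewrite leq_eqVlt => /orP[/eqP qi|]; last exact: Hy.
  by have -> : i = oq by apply: val_inj.
have [Pa Pb] := HP y oq Py ynint.
set f := Num.floor (y oq).
apply: (@conv_comb _ _ _ (upd y oq (f + 1)%:~R) (upd y oq f%:~R) _ (y oq - f%:~R)).
- rewrite subr_ge0 floor_le /=.
  by rewrite lerBlDl -(rmorphD _ f 1) ltW // floorD1_gt.
- apply: IH => //; first exact: ltnW.
  move=> i qi; rewrite /upd; case: eqP => [_|ne]; first exact: intr_int.
  apply: Hy; rewrite ltn_neqAle qi andbT; apply/eqP => e; apply: ne; exact: val_inj.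
- apply: IH => //; first exact: ltnW.
  move=> i qi; rewrite /upd; case: eqP => [_|ne]; first exact: intr_int.
  apply: Hy; rewrite ltn_neqAle qi andbT; apply/eqP => e; apply: ne; exact: val_inj.
move=> i; rewrite /upd; case: eqP => [->|_].
  rewrite rmorphD /= ; ring.
ring.
Qed.

End Round.

Section Lexd.
Variables (R : realType) (n : nat) (xbar : 'I_n -> R).
Hypothesis xb0 : forall i, 0 <= xbar i.

Lemma lexd_lt (k i : 'I_n) : (i < k)%N ->
  lexd xbar k i = xbar k * \prod_(j < n | (i < j)%N && (j < k)%N) (xbar j + 1).
Proof.
move=> ik; rewrite /lexd (ltn_eqF ik).
case: eqP => [e|//].
rewrite big_pred0 ?mulr1 // => j; apply/negbTE; rewrite negb_and -e ltnNge -ltnS.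
by case: ltnP.
Qed.

Lemma lexd_kk (k : 'I_n) : lexd xbar k k = 1.
Proof. by rewrite /lexd eqxx. Qed.

Lemma lexd_ge0 (k i : 'I_n) : 0 <= lexd xbar k i.
Proof.
rewrite /lexd; case: eqP => // _; case: eqP => // _.
by apply: mulr_ge0 => //; apply: prodr_ge0 => j _; apply: addr_ge0.
Qed.

Lemma lexd_ident (k p : 'I_n) : (p < k)%N ->
  lexd xbar k p = \sum_(i < n | (p < i)%N && (i <= k)%N) lexd xbar k i * xbar i.
Proof.
move=> pk; move: {2}(k - p.+1)%N (erefl (k - p.+1)%N) => m.
elim: m p pk => [|m IH] p pk e.
  have e' : k = p.+1 :> nat by lia.
  rewrite (bigD1 k) /=; last by rewrite pk leqnn.
  rewrite big_pred0; last first.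
    move=> j; apply/negP => /andP[/andP[a b] c]; move/negP: c; apply.
    by apply/eqP/val_inj => /=; lia.
  rewrite addr0 lexd_kk mul1r /lexd (ltn_eqF pk) e' eqxx //.
have p1n : (p.+1 < n)%N by apply: leq_trans (ltn_ord k); lia.
set p1 := Ordinal p1n.
have p1k : (p1 < k)%N by rewrite /=; lia.
have := IH p1 p1k ltac:(rewrite /=; lia) => IHe.
rewrite (bigD1 p1) /=; last by rewrite ltnSn ltnW.
rewrite (eq_bigl (fun i : 'I_n => (p1 < i)%N && (i <= k)%N)); last first.
  by move=> i /=; rewrite -val_eqE /=; lia.
rewrite -IHe (lexd_lt pk) (lexd_lt p1k).
rewrite (bigD1 p1) /=; last by rewrite ltnSn.
rewrite (eq_bigl (fun j : 'I_n => (p1 < j)%N && (j < k)%N)); first by ring.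
by move=> i /=; rewrite -val_eqE /=; lia.
Qed.

Lemma lexd_ident_le (k p : 'I_n) : (p <= k)%N ->
  \sum_(i < n | (p < i)%N && (i <= k)%N) lexd xbar k i * xbar i <= lexd xbar k p.
Proof.
rewrite leq_eqVlt => /orP[/eqP e|pk]; last by rewrite -lexd_ident.
have -> : p = k by apply: val_inj.
rewrite big_pred0 ?lexd_kk // => j; apply/negbTE; rewrite negb_and.
by case: ltnP.
Qed.

End Lexd.

Section Cuts.
Variables (R : realType) (n : nat) (xbar : 'I_n -> R).
Hypothesis xbi : nonneg_int_pt xbar.
Let xb0 : forall i, 0 <= xbar i. Proof. by move=> i; case: (xbi i). Qed.

Lemma cut_diff (k : 'I_n) (x : 'I_n -> R) : lex_cut xbar k x <->
  0 <= \sum_(i < n | (i <= k)%N) lexd xbar k i * (x i - xbar i).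
Proof.
rewrite /lex_cut.
have -> : \sum_(i < n | (i <= k)%N) lexd xbar k i * (x i - xbar i) =
  \sum_(i < n | (i <= k)%N) lexd xbar k i * x i - \sum_(i < n | (i <= k)%N) lexd xbar k i * xbar i.
  by rewrite -sumrB; apply: eq_bigr => i _; rewrite mulrBr.
by rewrite subr_ge0.
Qed.

Lemma cut_split (k p : 'I_n) (x : 'I_n -> R) : (p <= k)%N ->
  (forall j : 'I_n, (j < p)%N -> x j = xbar j) ->
  \sum_(i < n | (i <= k)%N) lexd xbar k i * (x i - xbar i) =
  lexd xbar k p * (x p - xbar p) +
  \sum_(i < n | (p < i)%N && (i <= k)%N) lexd xbar k i * (x i - xbar i).
Proof.
move=> pk agr.
rewrite (bigID (fun i : 'I_n => (p <= i)%N)) /=.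
rewrite [X in _ + X]big1 ?addr0; last first.
  by move=> i /andP[_]; rewrite -ltnNge => /agr ->; rewrite subrr mulr0.
rewrite (bigD1 p) /=; last by rewrite pk leqnn.
congr (_ + _); apply: eq_bigl => i /=; rewrite -val_eqE /=; lia.
Qed.

Lemma int_lt_succ (a b : R) : a \is a Num.int -> b \is a Num.int -> a < b -> a + 1 <= b.
Proof.
move=> /intrP[ma ->] /intrP[mb ->]; rewrite ltr_int => h.
by rewrite -(rmorphD _ ma 1) ler_int; lia.
Qed.

Lemma S_cut (y : 'I_n -> R) : nonneg_int_pt y -> lex_ge y xbar ->
  forall k, lex_cut xbar k y.
Proof.
move=> yint [->|[p [agr lt]]] k; first by rewrite /lex_cut.
have xbint : xbar p \is a Num.int by case: (xbi p).
apply/cut_diff.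
case: (ltnP k p) => kp.
  by rewrite big1 // => i ik; rewrite agr ?subrr ?mulr0 //; apply: leq_ltn_trans kp.
rewrite (cut_split (p:=p)) //; last by move=> j /agr ->.
have h1 : lexd xbar k p <= lexd xbar k p * (y p - xbar p).
  rewrite -[X in X <= _]mulr1 ler_wpM2l ?lexd_ge0 //.
  have ypi : y p \is a Num.int by case: (yint p).
  have := int_lt_succ xbint ypi lt; lra.
have h2 : - \sum_(i < n | (p < i)%N && (i <= k)%N) lexd xbar k i * xbar i <=
   \sum_(i < n | (p < i)%N && (i <= k)%N) lexd xbar k i * (y i - xbar i).
  rewrite -sumrN; apply: ler_sum => i _; rewrite mulrBr.
  have : 0 <= lexd xbar k i * y i by apply: mulr_ge0; [apply: lexd_ge0|case: (yint i)].
  lra.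
have h3 := @lexd_ident_le _ _ xbar _ _ kp.
lra.
Qed.

End Cuts.

Section Dir1.
Variables (R : realType) (n : nat) (xbar : 'I_n -> R).
Hypothesis xbi : nonneg_int_pt xbar.

Lemma dir1 x : Qset xbar x -> (forall i, 0 <= x i) /\ forall k, lex_cut xbar k x.
Proof.
move=> [m [lam [p [H1 [H2 [H3 H4]]]]]]; split.
  move=> i; rewrite H4; apply: sumr_ge0 => t _; apply: mulr_ge0 => //.
  by case: ((H3 t).1 i).
move=> k; rewrite /lex_cut.
set C := \sum_(i < n | (i <= k)%N) lexd xbar k i * xbar i.
have -> : C = \sum_(t < m) lam t * C by rewrite -mulr_suml H2 mul1r.
under [X in _ <= X]eq_bigr => i _ do rewrite H4 mulr_sumr.
rewrite exchange_big /=; apply: ler_sum => t _.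
have -> : \sum_(i < n | (i <= k)%N) lexd xbar k i * (lam t * p t i) =
   lam t * \sum_(i < n | (i <= k)%N) lexd xbar k i * p t i.
  by rewrite mulr_sumr; apply: eq_bigr => i _; ring.
apply: ler_wpM2l => //; have [Pi Pl] := H3 t; exact: S_cut.
Qed.

End Dir1.

Section Dir2.
Variables (R : realType) (n : nat) (xbar : 'I_n -> R).
Hypothesis xbi : nonneg_int_pt xbar.
Let xb0 : forall i, 0 <= xbar i. Proof. by move=> i; case: (xbi i). Qed.

Lemma conv_ext S (x y : 'I_n -> R) : conv_hull S y -> (forall i, x i = y i) -> conv_hull S x.
Proof.
move=> [m [lam [p [H1 [H2 [H3 H4]]]]]] e.
by exists m, lam, p; split=> //; split=> //; split=> // i; rewrite e H4.
Qed.

Lemma floor_ge_intr (a y : R) : a \is a Num.int -> a <= y -> a <= (Num.floor y)%:~R.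
Proof.
move=> /intrP[z ->] h; rewrite ler_int floor_ge_int //.
Qed.

Lemma sum_empty (k p : 'I_n) (F : 'I_n -> R) : k = p ->
  \sum_(i < n | (p < i)%N && (i <= k)%N) F i = 0.
Proof. move=> ->; rewrite big_pred0 // => i; lia. Qed.

Lemma dir2_main : forall m p, (p + m = n)%N -> forall x : 'I_n -> R,
  (forall i, 0 <= x i) -> (forall j : 'I_n, (j < p)%N -> x j = xbar j) ->
  (forall k : 'I_n, (p <= k)%N -> lex_cut xbar k x) -> Qset xbar x.
Proof.
elim=> [|m IH] p pm x x0 agr cuts.
  apply: (conv_ext (y := xbar)); first by apply: conv_pt; split=> //; left.
  by move=> i; apply: agr; rewrite -(addn0 p) pm.
have pn : (p < n)%N by lia.
set op := Ordinal pn.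
have agr' : forall j : 'I_n, (j < op)%N -> x j = xbar j by [].
have xp : xbar op <= x op.
  have := cuts op (leqnn _); move/cut_diff; rewrite (cut_split (p:=op)) // sum_empty //.
  by rewrite lexd_kk addr0 mul1r subr_ge0.
have [big|small] := lerP (xbar op + 1) (x op).
  apply: (round (P := fun y => (forall i, 0 <= y i) /\
      (forall j : 'I_n, (j < p)%N -> y j = xbar j) /\ xbar op + 1 <= y op)); last first.
    by split=> //; split.
  - move=> y q [y0 [ya yp]] ynint.
    have q0 : 0 <= (Num.floor (y q))%:~R :> R by rewrite ler0z floor_ge0.
    have q1 : (Num.floor (y q))%:~R <= (Num.floor (y q) + 1)%:~R :> R.
      by rewrite ler_int; lia.
    have qp : ~ (q < p)%N by move=> /ya e; move: ynint; rewrite e; case: (xbi q) => _ ->.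
    have qop : q = op -> xbar op + 1 <= (Num.floor (y q))%:~R.
      move=> e; apply: floor_ge_intr; last by rewrite e.
      by apply: rpredD; [case: (xbi op)|exact: int_num1].
    split; (split; [|split]).
    + by move=> i; rewrite /upd; case: eqP => // _; lra.
    + by move=> j jp; rewrite /upd; case: eqP => [e|_]; [by case: qp; rewrite -e|apply: ya].
    + rewrite /upd; case: eqP => [e|_] //; by have := qop (esym e); lra.
    + move=> i; rewrite /upd; case: eqP => // _; lra.
    + by move=> j jp; rewrite /upd; case: eqP => [e|_]; [by case: qp; rewrite -e|apply: ya].
    + rewrite /upd; case: eqP => [e|_] //; by have := qop (esym e); lra.
  - move=> y [y0 [ya yp]] yint; split.
      by move=> i; split.
    right; exists op; split; first by move=> j /ya ->.
    lra.
set th := x op - xbar op.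
have th0 : 0 <= th by rewrite /th subr_ge0.
have th1 : th < 1 by rewrite /th; lra.
have c0 : 0 < 1 - th by lra.
set a := fun i : 'I_n => if (i < p)%N then xbar i else if (i == p :> nat) then xbar i + 1 else 0.
set z := fun i : 'I_n => if (i <= p)%N then xbar i else x i / (1 - th).
apply: (conv_comb (a := a) (b := z) (th := th)).
- by rewrite th0 ltW.
- apply: conv_pt; split.
    move=> i; rewrite /a; case: ltnP => _; first exact: xbi.
    case: eqP => _; last by split=> //; exact: int_num0.
    split; first by have := xb0 i; lra.
    by apply: rpredD; [case: (xbi i)|exact: int_num1].
  right; exists op; split.
    by move=> j jp; rewrite /a jp.
  by rewrite /a /= ltnn eqxx; lra.
- apply: (IH p.+1); first by lia.
  + move=> i; rewrite /z; case: leqP => _ //.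
    by apply: divr_ge0 => //; lra.
  + by move=> j jp; rewrite /z -ltnS jp.
  move=> k pk; apply/cut_diff.
  have opk : (op < k)%N by [].
  have opk' : (op <= k)%N by apply: ltnW.
  rewrite (cut_split (p:=op)) //; last by move=> j jp; rewrite /z ltnW.
  rewrite /z /= leqnn subrr mulr0 add0r.
  have := cuts k (ltnW pk); move/cut_diff; rewrite (cut_split (p:=op)) //.
  rewrite (@lexd_ident _ _ xbar _ _ opk).
  set P := fun i : 'I_n => (op < i)%N && (i <= k)%N.
  have E1 : \sum_(i < n | P i) lexd xbar k i * (x i - xbar i) =
     \sum_(i < n | P i) lexd xbar k i * x i - \sum_(i < n | P i) lexd xbar k i * xbar i.
    by rewrite -sumrB; apply: eq_bigr => i _; rewrite mulrBr.
  have E2 : \sum_(i < n | P i) lexd xbar k i * ((if (i <= p)%N then xbar i else x i / (1 - th)) - xbar i) =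
     (\sum_(i < n | P i) lexd xbar k i * x i) / (1 - th) - \sum_(i < n | P i) lexd xbar k i * xbar i.
    rewrite mulr_suml -sumrB; apply: eq_big => // i /andP[pi _].
    by rewrite leqNgt pi /=; rewrite mulrBr mulrA.
  rewrite E1 E2 -/th => h.
  rewrite subr_ge0 ler_pdivlMr //; lra.
move=> i; rewrite /a /z; case: (ltngtP i p) => ip.
- by rewrite agr //; ring.
- field; rewrite subr_eq0; apply/eqP; lra.
- have -> : i = op by apply: val_inj.
  rewrite /th; ring.
Qed.

End Dir2.

Theorem theorem1 (R : realType) (n : nat) (xbar : 'I_n -> R) :
  (0 < n)%N ->
  nonneg_int_pt xbar ->
  (exists i, xbar i != 0) ->
  forall x : 'I_n -> R,
    Qset xbar x <-> ((forall i, 0 <= x i) /\ (forall k : 'I_n, lex_cut xbar k x)).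
Proof.
move=> _ xbi _ x; split; first exact: dir1.
move=> [x0 cuts]; apply: (@dir2_main R n xbar xbi n 0%N) => //.
Qed.
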